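(* The linear map $\varphi$ maps $\Sigma(B_n)$ into $\Sigma(A_{n-1})$ and, for every $J\subseteq\{0,1,\dots,n-1\}$, $$\varphi(Y_J)=\sum_{F\in\mathcal{F}_n,\ F\subseteq J\,\triangle\,(J+1)}2^{\#F}\,P_F.$$
   Context: $B_n$: signed permutations $w=w_1\dots w_n$, values ordered $\cdots<-2<-1<1<2<\cdots$, $w_0=0$; $\mathrm{Des}(w)=\{i\in\{0,\dots,n-1\}:w_i>w_{i+1}\}$; $Y_J=\sum_{\mathrm{Des}(w)=J}w\in\mathbb{Q}B_n$; $\Sigma(B_n)=\mathrm{span}\{Y_J\}$. $\Sigma(A_{n-1})\subseteq\mathbb{Q}\mathfrak{S}_n$ is the span of $\sum_{\mathrm{Des}(u)=J}u$, $J\subseteq[n-1]$, where $\mathrm{Des}(u)=\{i\in[n-1]:u_i>u_{i+1}\}$. $\varphi:\mathbb{Q}B_n\to\mathbb{Q}\mathfrak{S}_n$ is the linear extension of $w\mapsto|w_1|\dots|w_n|$. For $u\in\mathfrak{S}_n$, $\mathrm{Peak}(u)=\{i\in[n-1]:u_{i-1}<u_i>u_{i+1}\}$ with $u_0=0$; $\mathcal{F}_n$ is the set of subsets of $[n-1]$ with no two consecutive integers; $P_F=\sum_{\mathrm{Peak}(u)=F}u$. $J+1=\{j+1:j\in J\}$ and $\triangle$ is symmetric difference. *)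

(* Defs.v *)
From HB Require Import structures.
From mathcomp Require Import all_boot all_order all_fingroup all_algebra.
Set Implicit Arguments. Unset Strict Implicit. Unset Printing Implicit Defensive.
Import Order.TTheory GRing.Theory Num.Theory.
Local Open Scope ring_scope.

(* Positions 0..n are encoded as 'I_n.+1; subsets of {0,..,n} as {set 'I_n.+1}. *)

(* Signed permutations of [n]: w = (s, e); the entry in position i (1 <= i <= n)
   is w_i = (-1)^(e (i-1)) * (s (i-1) + 1); w_0 = 0. *)
Definition Bn (n : nat) : finType := ({perm 'I_n} * {ffun 'I_n -> bool})%type.

Definition wval (n : nat) (w : Bn n) (k : nat) : int :=
  match k with
  | 0 => 0
  | k'.+1 => match @insub nat (fun m => m < n)%N _ k' with
             | Some i => (if w.2 i then -1 else 1) * ((w.1 i).+1 : int)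
             | None => 0
             end
  end.

(* Permutations of [n]: u_i = u (i-1) + 1 for 1 <= i <= n, u_0 = 0. *)
Definition uval (n : nat) (u : 'S_n) (k : nat) : nat :=
  match k with
  | 0 => 0%N
  | k'.+1 => match @insub nat (fun m => m < n)%N _ k' with
             | Some i => (u i).+1
             | None => 0%N
             end
  end.

Definition DesB (n : nat) (w : Bn n) : {set 'I_n.+1} :=
  [set i : 'I_n.+1 | (i < n)%N && (wval w (i.+1) < wval w i)].

Definition DesA (n : nat) (u : 'S_n) : {set 'I_n.+1} :=
  [set i : 'I_n.+1 | [&& (0 < i)%N, (i < n)%N & (uval u i.+1 < uval u i)%N]].

Definition Peak (n : nat) (u : 'S_n) : {set 'I_n.+1} :=
  [set i : 'I_n.+1 | [&& (0 < i)%N, (i < n)%N,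
                         (uval u i.-1 < uval u i)%N & (uval u i.+1 < uval u i)%N]].

Definition setB (n : nat) : {set 'I_n.+1} := [set i : 'I_n.+1 | (i < n)%N].
Definition setA (n : nat) : {set 'I_n.+1} := [set i : 'I_n.+1 | (0 < i < n)%N].

Definition inFn (n : nat) (F : {set 'I_n.+1}) : bool :=
  (F \subset setA n) &&
  [forall i : 'I_n.+1, forall j : 'I_n.+1, (i \in F) ==> (j \in F) ==> (j != i.+1 :> nat)].

Definition shift1 (n : nat) (J : {set 'I_n.+1}) : {set 'I_n.+1} :=
  [set j : 'I_n.+1 | [exists i in J, j == i.+1 :> nat]].
Definition symdiff (T : finType) (A B : {set T}) : {set T} := (A :\: B) :|: (B :\: A).

(* Group algebras Q B_n and Q S_n as formal linear combinations. *)
Definition YB (n : nat) (J : {set 'I_n.+1}) : {ffun Bn n -> rat} :=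
  [ffun w => (DesB w == J)%:R].
Definition YA (n : nat) (J : {set 'I_n.+1}) : {ffun 'S_n -> rat} :=
  [ffun u => (DesA u == J)%:R].
Definition PF (n : nat) (F : {set 'I_n.+1}) : {ffun 'S_n -> rat} :=
  [ffun u => (Peak u == F)%:R].

Definition scl (T : finType) (a : rat) (f : {ffun T -> rat}) : {ffun T -> rat} :=
  [ffun t => a * f t].

Definition inSigmaB (n : nat) (x : {ffun Bn n -> rat}) : Prop :=
  exists c : {set 'I_n.+1} -> rat,
    x = \sum_(J : {set 'I_n.+1} | J \subset setB n) scl (c J) (YB J).
Definition inSigmaA (n : nat) (x : {ffun 'S_n -> rat}) : Prop :=
  exists c : {set 'I_n.+1} -> rat,
    x = \sum_(J : {set 'I_n.+1} | J \subset setA n) scl (c J) (YA J).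

(* phi : linear extension of w |-> |w_1| ... |w_n| *)
Definition phi (n : nat) (x : {ffun Bn n -> rat}) : {ffun 'S_n -> rat} :=
  [ffun u => \sum_(w : Bn n | w.1 == u) x w].

(* Main.v *)
Require Import Defs.
From HB Require Import structures.
From mathcomp Require Import all_boot all_order all_fingroup all_algebra.
From mathcomp Require Import zify.
Import Order.TTheory GRing.Theory Num.Theory.
Set Implicit Arguments. Unset Strict Implicit. Unset Printing Implicit Defensive.
Local Open Scope ring_scope.

Lemma int_desc (x y : int) : y != 0 -> (x == 0) || (`|x| != `|y|) ->
  (y < x) = if `|y| < `|x| then ~~ (x < 0) else (y < 0).
Proof. move=> H1 H2. case: (boolP (x < 0)) => Hx; case: (boolP (y<0)) => Hy;
  case: (boolP (`|y| < `|x|)) => Hn /=; lia. Qed.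

Lemma uvalS n (u : 'S_n) (m : 'I_n) : uval u (val m).+1 = (u m).+1.
Proof. by rewrite /uval valK. Qed.

Lemma wvalS n (w : Bn n) (m : 'I_n) :
  wval w (val m).+1 = (if w.2 m then -1 else 1) * ((w.1 m).+1 : int).
Proof. by rewrite /wval valK. Qed.

Lemma uval_big n (u : 'S_n) k : (n < k)%N -> uval u k = 0%N.
Proof.
case: k => // k Hk; rewrite /uval insubF //; apply/negbTE; rewrite -leqNgt; lia.
Qed.

Lemma wval_big n (w : Bn n) k : (n < k)%N -> wval w k = 0.
Proof.
case: k => // k Hk; rewrite /wval insubF //; apply/negbTE; rewrite -leqNgt; lia.
Qed.

Lemma norm_wval n (u : 'S_n) e k : `|wval (u, e) k| = (uval u k)%:Z.
Proof.
case: k => [|k] //.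
case: (ltnP k n) => Hk.
  have -> : k = val (Ordinal Hk) by [].
  rewrite wvalS uvalS /=; case: (e _); rewrite ?mulN1r ?mul1r //.
by rewrite wval_big ?uval_big.
Qed.

Lemma wval_neg n (u : 'S_n) e (m : 'I_n) : (wval (u, e) (val m).+1 < 0) = e m.
Proof. rewrite wvalS /=; case: (e m); rewrite ?mulN1r ?mul1r; lia. Qed.

Lemma uval_inj n (u : 'S_n) k : (0 < k)%N -> (k < n)%N -> uval u k != uval u k.+1.
Proof.
case: k => // k _ Hk.
have Hk1 : (k < n)%N by lia.
rewrite (uvalS u (Ordinal Hk1)) (uvalS u (Ordinal Hk)).
apply/eqP => -[] /val_inj /(@perm_inj _ u) /(congr1 val) /=; lia.
Qed.

Definition Dd n (u : 'S_n) m : bool := (m < n)%N && (uval u m.+1 < uval u m)%N.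
Definition sg n (w : Bn n) k : bool := wval w k < 0.

Lemma uval_pos n (u : 'S_n) k : (0 < k)%N -> (k <= n)%N -> (0 < uval u k)%N.
Proof.
case: k => // k _ Hk.
by rewrite (uvalS u (Ordinal Hk)).
Qed.

Lemma desc_char n (u : 'S_n) e i : (i < n)%N ->
  (wval (u, e) i.+1 < wval (u, e) i) = if Dd u i then ~~ sg (u, e) i else sg (u, e) i.+1.
Proof.
move=> Hi; rewrite /Dd /sg Hi andTb.
rewrite int_desc.
- by rewrite !norm_wval ltz_nat.
- rewrite -normr_eq0 norm_wval; have := uval_pos u (isT : (0 < i.+1)%N) Hi; lia.
- case: i Hi => [|i] Hi; first by rewrite /wval eqxx.
  rewrite !norm_wval; have := uval_inj u (isT : (0 < i.+1)%N) Hi.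
  by move=> H; rewrite orbC; apply/orP; left; apply: contra H => /eqP [] /eqP.
Qed.

Lemma stepY (n : nat) (D s j : nat -> bool) : D 0 = false -> D n = false ->
 (forall i, (i < n)%N -> (if D i then ~~ s i else s i.+1) = j i) <->
 (forall m, (m < n)%N -> (D m || (s m.+1 == j m)) && (~~ D m.+1 || (s m.+1 == ~~ j m.+1))).
Proof.
move=> D0 Dn; split.
- move=> H m Hm; apply/andP; split.
  + case E: (D m) => //=; have := H m Hm; rewrite E => ->; by [].
  + case E: (D m.+1) => //=.
    have Hm1 : (m.+1 < n)%N.
      rewrite ltn_neqAle Hm andbT; apply/eqP => En; by rewrite En Dn in E.
    have := H _ Hm1; rewrite E => <-; by rewrite negbK.
- move=> H i Hi; case E: (D i).
  + case: i Hi E => [|m] Hi E; first by rewrite D0 in E.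
    have Hm : (m < n)%N by lia.
    have /andP [_ ] := H m Hm; rewrite E /= => /eqP ->; by rewrite negbK.
  + have /andP [] := H i Hi; by rewrite E /= => /eqP -> _.
Qed.

Definition jb n (J : {set 'I_n.+1}) k : bool := (inord k : 'I_n.+1) \in J.
Definition cc n (u : 'S_n) (J : {set 'I_n.+1}) m b : bool :=
  (Dd u m || (b == jb J m)) && (~~ Dd u m.+1 || (b == ~~ jb J m.+1)).

Lemma DesB_eq n (u : 'S_n) e (J : {set 'I_n.+1}) : J \subset setB n ->
  (DesB (u, e) == J) = [forall m : 'I_n, cc u J m (e m)].
Proof.
move=> HJ.
have D0 : Dd u 0 = false by rewrite /Dd /= andbF.
have Dn : Dd u n = false by rewrite /Dd ltnn.
have key := stepY (sg (u, e)) (jb J) D0 Dn.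
have Hs : forall m : 'I_n, sg (u, e) (val m).+1 = e m by move=> m; rewrite /sg wval_neg.
apply/eqP/forallP.
- move=> H m; rewrite /cc -Hs; apply: (proj1 key) => // i Hi.
  rewrite -desc_char // /jb -H /DesB inE.
  have Hi' : (i < n.+1)%N by lia.
  by rewrite inordK // Hi.
- move=> H; apply/setP => i; rewrite /DesB inE.
  case: (ltnP i n) => Hi /=.
  + rewrite desc_char //.
    have := (proj2 key) _ (val i) Hi. rewrite /jb inord_val => -> //.
    move=> m Hm; have := H (Ordinal Hm); by rewrite /cc -Hs.
  + apply/esym/negbTE; apply: contraL Hi => HiJ.
    have := subsetP HJ _ HiJ; rewrite /setB inE; lia.
Qed.

Lemma prod_bool (I : finType) (b : I -> bool) :
  (\prod_(m : I) ((b m)%:R : rat)) = ([forall m, b m])%:R.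
Proof.
case: (boolP [forall m, b m]) => H.
- by rewrite big1 // => m _; rewrite (forallP H).
- move/forallPn: H => [m /negbTE Hm].
  by rewrite (bigD1 m) //= Hm mul0r.
Qed.

Lemma phiYB_u n (J : {set 'I_n.+1}) (u : 'S_n) : J \subset setB n ->
  phi (YB J) u = \prod_(m : 'I_n) \sum_(b : bool) ((cc u J m b)%:R : rat).
Proof.
move=> HJ.
rewrite /phi ffunE.
rewrite (eq_bigl (fun p : Bn n => (p.1 == u) && true)); last by move=> p; rewrite andbT.
rewrite (eq_bigr (fun p : Bn n => YB J (p.1, p.2))); last by case.
rewrite -(pair_big (fun p : 'S_n => p == u) (fun _ => true) (fun p e => YB J (p, e))) /=.
rewrite big_pred1_eq.
rewrite bigA_distr_bigA /=.
apply: eq_bigr => e _.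
by rewrite prod_bool ffunE DesB_eq.
Qed.

Definition pk n (u : 'S_n) m : bool := ~~ Dd u m && Dd u m.+1.

Lemma factor_eq n (u : 'S_n) (J : {set 'I_n.+1}) m :
  \sum_(b : bool) ((cc u J m b)%:R : rat) =
  ((if Dd u m && ~~ Dd u m.+1 then 2 else 1)%:R : rat) *
  ((pk u m ==> (jb J m != jb J m.+1)) : nat)%:R.
Proof.
rewrite big_bool /= -natrD -natrM /cc /pk.
by case: (Dd u m); case: (Dd u m.+1); case: (jb J m); case: (jb J m.+1).
Qed.

Lemma telesc (D : nat -> bool) k :
  (\sum_(m < k) (D m && ~~ D m.+1) + D k = \sum_(m < k) (~~ D m && D m.+1) + D 0)%N.
Proof.
elim: k => [|k IH]; first by rewrite !big_ord0.
rewrite !big_ord_recr /=.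
move: IH; case: (D k); case: (D k.+1) => /=; lia.
Qed.

Lemma prod2 (I : finType) (b : I -> bool) :
  (\prod_(m : I) (if b m then 2 else 1) = 2 ^ (\sum_(m : I) (b m : nat)))%N.
Proof. rewrite expn_sum; apply: eq_bigr => m _; by case: (b m). Qed.

Lemma Peak_mem n (u : 'S_n) (i : 'I_n.+1) :
  (i \in Peak u) = (0 < i)%N && pk u i.-1.
Proof.
rewrite /Peak inE /pk /Dd.
case: i => [[|m] Hm]; first by [].
rewrite (_ : (Ordinal Hm).-1 = m) //.
rewrite (_ : nat_of_ord (Ordinal Hm) = m.+1) //.
case: (ltnP m.+1 n) => Hm1; last by rewrite !andbF.
have Hne : uval u m != uval u m.+1.
  case: m Hm Hm1 => [|m] Hm Hm1.
    have := uval_pos u (isT : (0 < 1)%N) (ltnW Hm1); rewrite /uval /=; lia.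
  exact: uval_inj.
move: Hne; move: (uval u m) (uval u m.+1) (uval u m.+2) => a b c.
have -> : (m < n)%N by lia.
rewrite /= => Hne; case: (c < b)%N; rewrite ?andbT ?andbF /=; lia.
Qed.

Lemma card_Peak n (u : 'S_n) : #|Peak u| = (\sum_(m < n) (pk u m : nat))%N.
Proof.
rewrite -sum1_card big_mkcond big_ord_recl /=.
rewrite Peak_mem /= add0n; apply: eq_bigr => m _.
by rewrite Peak_mem lift0 /=; case: (pk u m).
Qed.

Lemma shift1_mem n (J : {set 'I_n.+1}) (i : 'I_n.+1) m :
  val i = m.+1 -> (i \in shift1 J) = jb J m.
Proof.
move=> Hi; rewrite /shift1 inE /jb.
have Hi' : nat_of_ord i = m.+1 := Hi.
have Hm : (m < n.+1)%N by have := ltn_ord i; lia.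
apply/existsP/idP.
- move=> [k /andP [kJ /eqP Hk]].
  have -> : (inord m : 'I_n.+1) = k by apply: val_inj; rewrite /= inordK //; lia.
  by [].
- move=> H; exists (inord m); rewrite H /= inordK //; apply/eqP; lia.
Qed.

Lemma sd_mem n (J : {set 'I_n.+1}) (i : 'I_n.+1) m :
  val i = m.+1 -> (i \in symdiff J (shift1 J)) = (jb J m != jb J m.+1).
Proof.
move=> Hi; rewrite /symdiff in_setU !in_setD (shift1_mem J Hi).
have -> : (i \in J) = jb J m.+1 by rewrite /jb -Hi inord_val.
by case: (jb J m); case: (jb J m.+1).
Qed.

Lemma Peak_sub n (u : 'S_n) (J : {set 'I_n.+1}) :
  (Peak u \subset symdiff J (shift1 J)) =
  [forall m : 'I_n, pk u m ==> (jb J m != jb J m.+1)].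
Proof.
apply/subsetP/forallP.
- move=> H m; apply/implyP => Hp.
  have Hl : (lift ord0 m : 'I_n.+1) \in Peak u by rewrite Peak_mem lift0 /=.
  by have := H _ Hl; rewrite (sd_mem J (lift0 m)).
- move=> H i; rewrite Peak_mem => /andP [Hi Hp].
  have Hm : (i.-1 < n)%N.
    move: Hp; rewrite /pk /Dd => /andP [_ /andP [Hn _]]; lia.
  have := H (Ordinal Hm); rewrite /= Hp /= => Hj.
  by rewrite (@sd_mem _ J i i.-1) // prednK.
Qed.

Lemma inFn_Peak n (u : 'S_n) : inFn (Peak u).
Proof.
apply/andP; split.
- apply/subsetP => i; rewrite /Peak /setA !inE => /and4P [H1 H2 _ _]; by rewrite H1 H2.
- apply/forallP => i; apply/forallP => j; apply/implyP; rewrite /Peak !inE.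
  move=> /and4P [_ _ _ H1]; apply/implyP => /and4P [_ _ H2 _].
  apply/eqP => Hj; move: H2; rewrite Hj succnK; move: H1; lia.
Qed.

Lemma sum_pick (T : finType) (P : pred T) (f : T -> rat) g :
  \sum_(K | P K) f K * ((g == K)%:R) = if P g then f g else 0.
Proof.
case: (boolP (P g)) => Hg.
- rewrite (bigD1 g) //= eqxx mulr1 big1 ?addr0 // => K /andP [_ HK].
  by rewrite eq_sym (negbTE HK) mulr0.
- rewrite big1 // => K HK; case: eqP => [E|_]; last by rewrite mulr0.
  by rewrite E HK in Hg.
Qed.

Definition hval n (J : {set 'I_n.+1}) (P : {set 'I_n.+1}) : rat :=
  if P \subset symdiff J (shift1 J) then (2 ^ #|P|)%:R else 0.

Lemma main_u n (J : {set 'I_n.+1}) (u : 'S_n) : J \subset setB n ->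
  phi (YB J) u = hval J (Peak u).
Proof.
move=> HJ.
rewrite phiYB_u // (eq_bigr _ (fun (m : 'I_n) _ => factor_eq u J m)) big_split /=.
rewrite prod_bool -natr_prod prod2 /hval Peak_sub card_Peak.
have := telesc (Dd u) n.
have -> : Dd u n = false by rewrite /Dd ltnn.
have -> : Dd u 0 = false by rewrite /Dd /= andbF.
rewrite !addn0 /pk => ->.
by case: [forall _, _]; rewrite ?mulr1 ?mulr0.
Qed.

Lemma rhs_u n (J : {set 'I_n.+1}) (u : 'S_n) :
  (\sum_(F : {set 'I_n.+1} | inFn F && (F \subset symdiff J (shift1 J)))
        scl (2 ^ #|F|)%:R (PF F)) u = hval J (Peak u).
Proof.
rewrite sum_ffunE.
rewrite (eq_bigr (fun F : {set 'I_n.+1} => (2 ^ #|F|)%:R * ((Peak u == F)%:R))); last first.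
  by move=> F _; rewrite !ffunE.
by rewrite sum_pick inFn_Peak /hval; case: (_ \subset _).
Qed.

Definition PK n (K : {set 'I_n.+1}) : {set 'I_n.+1} :=
  [set i : 'I_n.+1 | (i \in K) && ((inord i.-1 : 'I_n.+1) \notin K)].

Lemma DesA_mem n (u : 'S_n) (k : 'I_n.+1) : (k \in DesA u) = (0 < k)%N && Dd u k.
Proof. by rewrite /DesA inE /Dd. Qed.

Lemma Peak_PK n (u : 'S_n) : Peak u = PK (DesA u).
Proof.
apply/setP => i; rewrite Peak_mem /PK inE !DesA_mem /pk.
have Hi : (i.-1 < n.+1)%N by have := ltn_ord i; lia.
rewrite inordK //.
case: (nat_of_ord i) => [|[|k]] //=.
by rewrite /Dd /= andbF andbT.
by rewrite andbC.
Qed.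

Theorem proposition3p2 (n : nat) :
  (forall x : {ffun Bn n -> rat}, inSigmaB x -> inSigmaA (phi x)) /\
  (forall J : {set 'I_n.+1}, J \subset setB n ->
     phi (YB J) =
     \sum_(F : {set 'I_n.+1} | inFn F && (F \subset symdiff J (shift1 J)))
        scl (2 ^ #|F|)%:R (PF F)).
Proof.
split; last first.
  by move=> J HJ; apply/ffunP => u; rewrite main_u // rhs_u.
move=> x [c ->].
exists (fun K => \sum_(J : {set 'I_n.+1} | J \subset setB n) c J * hval J (PK K)).
apply/ffunP => u.
rewrite sum_ffunE.
rewrite (eq_bigr (fun K : {set 'I_n.+1} =>
   (\sum_(J : {set 'I_n.+1} | J \subset setB n) c J * hval J (PK K)) * ((DesA u == K)%:R))); last first.
  by move=> K _; rewrite !ffunE.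
rewrite sum_pick.
have -> : DesA u \subset setA n.
  by apply/subsetP => i; rewrite /DesA /setA !inE => /and3P [-> -> _].
rewrite -Peak_PK.
rewrite /phi ffunE.
under eq_bigr do rewrite sum_ffunE.
rewrite exchange_big /=.
apply: eq_bigr => J HJ.
rewrite -main_u // /phi ffunE mulr_sumr.
by apply: eq_bigr => w _; rewrite ffunE.
Qed.
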